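(* Let $\mathcal{F}$ be a family of pairwise intersecting compact convex sets in the plane. Then for any distinct $A,B,C,D\in\mathcal{F}$, if $o(ABD)=o(BCD)=o(CAD)=1$ then $o(ABC)=1$.
   Context: For three pairwise intersecting compact convex sets $A,B,C$ in the plane: $o(ABC)=0$ if $A\cap B\cap C\neq\emptyset$; otherwise $o(ABC)=o(xyz)$ for any $x\in B\cap C$, $y\in A\cap C$, $z\in A\cap B$, where for points $o(xyz)=+1$ if $x,y,z$ form a counterclockwise triangle and $-1$ if clockwise (this is known to be independent of the choice of $x,y,z$, and the points are never collinear in this case). *)

(* Defs.v *)
From HB Require Import structures.
From mathcomp Require Import all_boot all_order all_algebra.
From mathcomp Require Import all_classical all_reals topology normedtype.
Set Implicit Arguments. Unset Strict Implicit. Unset Printing Implicit Defensive.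
Import Order.TTheory GRing.Theory Num.Theory.
Import numFieldNormedType.Exports.
Local Open Scope classical_set_scope.
Local Open Scope ring_scope.


Definition convex_set2 (R : realType) (A : set ((R * R)%type)) : Prop :=
  forall x y, A x -> A y -> forall t : R, 0 <= t <= 1 ->
    A (t * x.1 + (1 - t) * y.1, t * x.2 + (1 - t) * y.2).

Definition ccw (R : realType) (x y z : (R * R)%type) : Prop :=
  0 < (y.1 - x.1) * (z.2 - x.2) - (y.2 - x.2) * (z.1 - x.1).

(* o(ABC): 0 if A∩B∩C is nonempty; otherwise o(xyz) for points
   x ∈ B∩C, y ∈ A∩C, z ∈ A∩B (+1 if some such triple is ccw, else -1;
   by the known independence fact this agrees with "any choice"). *)
Definition orient (R : realType) (A B C : set ((R * R)%type)) : int :=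
  if `[< A `&` B `&` C !=set0 >] then 0%R
  else if `[< exists x y z : (R * R)%type,
                 (B `&` C) x /\ (A `&` C) y /\ (A `&` B) z /\ ccw x y z >]
       then 1%R else (-1)%R.

(* Main.v *)
Require Import Defs.
From HB Require Import structures.
From mathcomp Require Import all_boot all_order all_algebra.
From mathcomp Require Import all_classical all_reals topology normedtype derive.
From mathcomp Require Import ring lra.
Import Order.TTheory GRing.Theory Num.Theory.
Import numFieldNormedType.Exports.
Local Open Scope classical_set_scope.
Local Open Scope ring_scope.

Definition dt {R : realType} (x y z : (R*R)%type) : R :=
  (y.1 - x.1) * (z.2 - x.2) - (y.2 - x.2) * (z.1 - x.1).
Definition cmb {R : realType} (t : R) (x y : (R*R)%type) : (R*R)%type :=
  (t * x.1 + (1 - t) * y.1, t * x.2 + (1 - t) * y.2).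
Definition nn {R : realType} (p : (R*R)%type) : R := p.1 ^+ 2 + p.2 ^+ 2.

Lemma dt_cmb1 {R : realType} (t : R) (x x' y z : (R*R)%type) :
  dt (cmb t x x') y z = t * dt x y z + (1 - t) * dt x' y z.
Proof. rewrite /dt /cmb /=; ring. Qed.
Lemma dt_cyc {R : realType} (x y z : (R*R)%type) : dt x y z = dt y z x.
Proof. rewrite /dt; ring. Qed.
Lemma dt_swap {R : realType} (x y z : (R*R)%type) : dt x y z = - dt y x z.
Proof. rewrite /dt; ring. Qed.

Lemma cross {R : realType} {a b : R} : 0 < a -> b <= 0 ->
  exists t, 0 <= t <= 1 /\ t * a + (1 - t) * b = 0.
Proof.
move=> ha hb; have hab : 0 < a - b by lra.
exists ((- b) / (a - b)); split.
  apply/andP; split; first by apply: divr_ge0; lra.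
  by rewrite ler_pdivrMr //; lra.
by field; rewrite gt_eqF.
Qed.

Lemma between {R : realType} (p q r : (R*R)%type) : dt p q r = 0 ->
  (exists t, 0 <= t <= 1 /\ r = cmb t p q) \/
  (exists t, 0 <= t <= 1 /\ p = cmb t q r) \/
  (exists t, 0 <= t <= 1 /\ q = cmb t p r).
Proof.
case: p => p1 p2; case: q => q1 q2; case: r => r1 r2; rewrite /dt /cmb /= => h.
set w := (q1 - p1) ^+ 2 + (q2 - p2) ^+ 2.
have [w0|wn0] := eqVneq w 0.
  move/eqP: w0; rewrite /w paddr_eq0 ?sqr_ge0 // !sqrf_eq0 !subr_eq0.
  move=> /andP[/eqP e1 /eqP e2].
  right; right; exists 1; split; first by rewrite ler01 lexx.
  by rewrite e1 e2; congr pair; ring.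
set s := (q1 - p1) * (r1 - p1) + (q2 - p2) * (r2 - p2).
have e1 : (r1 - p1) * w - s * (q1 - p1) =
   - (q2 - p2) * ((q1 - p1) * (r2 - p2) - (q2 - p2) * (r1 - p1)) by rewrite /w /s; ring.
have e2 : (r2 - p2) * w - s * (q2 - p2) =
   (q1 - p1) * ((q1 - p1) * (r2 - p2) - (q2 - p2) * (r1 - p1)) by rewrite /w /s; ring.
rewrite h mulr0 in e1 e2.
pose L := s / w.
have hv1 : r1 = p1 + L * (q1 - p1).
  suff : L * (q1 - p1) = r1 - p1 by lra.
  rewrite /L mulrAC; apply: (mulIf wn0); rewrite divfK //; lra.
have hv2 : r2 = p2 + L * (q2 - p2).
  suff : L * (q2 - p2) = r2 - p2 by lra.
  rewrite /L mulrAC; apply: (mulIf wn0); rewrite divfK //; lra.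
clearbody L; clear e1 e2 h.
have [L0|L0] := ltP L 0.
  right; left; exists ((- L) / (1 - L)); split.
    apply/andP; split; first by apply: divr_ge0; lra.
    by rewrite ler_pdivrMr; lra.
  have hn : 1 - L != 0 by rewrite gt_eqF //; lra.
  by rewrite hv1 hv2; congr pair; field.
have [L1|L1] := leP L 1.
  left; exists (1 - L); split; first by apply/andP; split; lra.
  by rewrite hv1 hv2; congr pair; ring.
right; right; exists (1 - L^-1); split.
  have hi : 0 < L^-1 by rewrite invr_gt0; lra.
  have hi1 : L^-1 < 1 by rewrite invf_lt1; lra.
  by apply/andP; split; lra.
have hn : L != 0 by rewrite gt_eqF //; lra.
by rewrite hv1 hv2; congr pair; field.
Qed.

Lemma dt_cmb2 {R : realType} (t : R) (x y y' z : (R*R)%type) :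
  dt x (cmb t y y') z = t * dt x y z + (1 - t) * dt x y' z.
Proof. rewrite /dt /cmb /=; ring. Qed.

Lemma cvxP {R : realType} {X : set (R*R)%type} {x y} {t : R} :
  convex_set2 X -> X x -> X y -> 0 <= t <= 1 -> X (cmb t x y).
Proof. by move=> h hx hy ht; apply: h. Qed.

Lemma nonzero {R : realType} {X Y Z : set (R*R)%type} :
  convex_set2 X -> convex_set2 Y -> convex_set2 Z ->
  (forall p, X p -> Y p -> Z p -> False) ->
  forall x y z, Y x -> Z x -> X y -> Z y -> X z -> Y z -> dt x y z != 0.
Proof.
move=> cX cY cZ e x y z Yx Zx Xy Zy Xz Yz; apply/eqP => /between
  [[t [ht ez]] | [[t [ht ex]] | [t [ht ey]]]].
- by subst z; apply: (e _ Xz Yz); exact: cvxP.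
- by subst x; apply: (e _ _ Yx Zx); exact: cvxP.
- by subst y; apply: (e _ Xy _ Zy); exact: cvxP.
Qed.

Lemma indep1 {R : realType} {X Y Z : set (R*R)%type} :
  convex_set2 X -> convex_set2 Y -> convex_set2 Z ->
  (forall p, X p -> Y p -> Z p -> False) ->
  forall x x' y z, Y x -> Z x -> Y x' -> Z x' -> X y -> Z y -> X z -> Y z ->
  0 < dt x y z -> 0 < dt x' y z.
Proof.
move=> cX cY cZ e x x' y z Yx Zx Yx' Zx' Xy Zy Xz Yz hp.
rewrite ltNge; apply/negP => hn.
have [t [ht h0]] := cross hp hn.
have := nonzero cX cY cZ e _ _ _ (cvxP cY Yx Yx' ht) (cvxP cZ Zx Zx' ht) Xy Zy Xz Yz.
by rewrite dt_cmb1 h0 eqxx.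
Qed.

Lemma indep {R : realType} {X Y Z : set (R*R)%type} :
  convex_set2 X -> convex_set2 Y -> convex_set2 Z ->
  (forall p, X p -> Y p -> Z p -> False) ->
  forall x y z x' y' z', Y x -> Z x -> X y -> Z y -> X z -> Y z ->
  Y x' -> Z x' -> X y' -> Z y' -> X z' -> Y z' ->
  0 < dt x y z -> 0 < dt x' y' z'.
Proof.
move=> cX cY cZ e x y z x' y' z' Yx Zx Xy Zy Xz Yz Yx' Zx' Xy' Zy' Xz' Yz' h.
have h1 : 0 < dt x' y z := indep1 cX cY cZ e _ _ _ _ Yx Zx Yx' Zx' Xy Zy Xz Yz h.
have e2 : forall p, Y p -> Z p -> X p -> False by move=> p a b c; exact: e p c a b.
have e3 : forall p, Z p -> X p -> Y p -> False by move=> p a b c; exact: e p b c a.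
rewrite dt_cyc in h1.
have h2 : 0 < dt y' z x' := indep1 cY cZ cX e2 _ _ _ _ Zy Xy Zy' Xy' Yz Xz Yx' Zx' h1.
rewrite dt_cyc in h2.
have h3 : 0 < dt z' x' y' := indep1 cZ cX cY e3 _ _ _ _ Xz Yz Xz' Yz' Zx' Yx' Zy' Xy' h2.
by rewrite dt_cyc in h3.
Qed.

Lemma nn_cmb {R : realType} (t : R) (p q : (R*R)%type) :
  nn (cmb t p q) = t * nn p + (1 - t) * nn q - t * (1 - t) * nn (p.1 - q.1, p.2 - q.2).
Proof. rewrite /nn /cmb /=; ring. Qed.

Lemma scw {R : realType} (t : R) (p q : (R*R)%type) M :
  0 <= t <= 1 -> nn p <= M -> nn q <= M -> nn (cmb t p q) <= M.
Proof.
move=> /andP[t0 t1] hp hq; rewrite nn_cmb.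
have a0 : 0 <= nn (p.1 - q.1, p.2 - q.2) by rewrite /nn addr_ge0 // sqr_ge0.
have a1 : 0 <= t * (M - nn p) by apply: mulr_ge0; lra.
have a2 : 0 <= (1 - t) * (M - nn q) by apply: mulr_ge0; lra.
have a3 : 0 <= t * (1 - t) * nn (p.1 - q.1, p.2 - q.2).
  by apply: mulr_ge0 => //; apply: mulr_ge0; lra.
lra.
Qed.

Lemma scs {R : realType} (t : R) (p q : (R*R)%type) M :
  0 <= t <= 1 -> nn p <= M -> nn q <= M -> cmb t p q <> p -> cmb t p q <> q ->
  nn (cmb t p q) < M.
Proof.
move=> /andP[t0 t1] hp hq hnp hnq.
have tn1 : t != 1.
  apply/eqP => et; apply: hnp; rewrite et /cmb; case: (p) => ? ? /=; congr pair; ring.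
have tn0 : t != 0.
  apply/eqP => et; apply: hnq; rewrite et /cmb; case: (q) => ? ? /=; congr pair; ring.
have pq : nn (p.1 - q.1, p.2 - q.2) != 0.
  rewrite /nn /= paddr_eq0 ?sqr_ge0 // !sqrf_eq0 !subr_eq0; apply/negP => /andP[/eqP e1 /eqP e2].
  apply: hnp; have -> : q = p by case: (p) (q) e1 e2 => ? ? [? ?] /= -> ->.
  rewrite /cmb; case: (p) => ? ? /=; congr pair; ring.
have a0 : 0 < nn (p.1 - q.1, p.2 - q.2) by rewrite lt_def pq /= /nn addr_ge0 // sqr_ge0.
have tp : 0 < t by rewrite lt_def tn0 t0.
have tp1 : 0 < 1 - t by rewrite subr_gt0 lt_def eq_sym tn1 t1.
have a1 : 0 <= t * (M - nn p) by apply: mulr_ge0; lra.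
have a2 : 0 <= (1 - t) * (M - nn q) by apply: mulr_ge0; lra.
have a3 : 0 < t * (1 - t) * nn (p.1 - q.1, p.2 - q.2) by rewrite !mulr_gt0.
rewrite nn_cmb; lra.
Qed.

Lemma coll {R : realType} {X Y : set (R*R)%type} : convex_set2 X -> convex_set2 Y ->
  forall u v z M, Y u -> X v -> X z -> Y z -> dt u v z = 0 -> nn u <= M -> nn v <= M ->
  (X u -> nn u < M) -> (Y v -> nn v < M) -> exists w, X w /\ Y w /\ nn w < M.
Proof.
move=> cX cY u v z M Yu Xv Xz Yz hdt hu hv su sv.
case: (between _ _ _ hdt) => [[t [ht ez]]|[[t [ht eu]]|[t [ht ev]]]].
- case: (z =P u) => [zu|zu].
    rewrite zu in Xz; exists u; split; [done|split; [done|exact: su]].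
  case: (z =P v) => [zv|zv].
    rewrite zv in Yz; exists v; split; [done|split; [done|exact: sv]].
  exists z; split; [done|split; [done|]]; rewrite ez; by apply: scs => //; rewrite -ez.
- have Xu : X u by rewrite eu; apply: cvxP.
  exists u; split; [done|split; [done|exact: su]].
- have Yv : Y v by rewrite ev; apply: cvxP.
  exists v; split; [done|split; [done|exact: sv]].
Qed.

Lemma flip {R : realType} {X Y : set (R*R)%type} : convex_set2 X -> convex_set2 Y ->
  forall z u0 u1 v0 v1 M, X z -> Y z -> Y u0 -> Y u1 -> X v0 -> X v1 ->
  ~ X u0 -> ~ X u1 -> ~ Y v0 -> ~ Y v1 ->
  nn u0 <= M -> nn u1 <= M -> nn v0 <= M -> nn v1 <= M ->
  0 < dt u0 v0 z -> dt u1 v1 z < 0 -> exists w, X w /\ Y w /\ nn w < M.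
Proof.
move=> cX cY z u0 u1 v0 v1 M Xz Yz Yu0 Yu1 Xv0 Xv1 nu0 nu1 nv0 nv1 m0 m1 m2 m3 h0 h1.
have [h2|h2] := leP (dt u1 v0 z) 0.
- have [t [ht e]] := cross h0 h2.
  apply: (coll cX cY (cmb t u0 u1) v0 z M (cvxP cY Yu0 Yu1 ht) Xv0 Xz Yz _
           (scw _ _ _ _ ht m0 m1) m2 _ (fun h => False_ind _ (nv0 h))).
  + by rewrite dt_cmb1.
  + move=> Xu; apply: scs => // eq; [apply: nu0 | apply: nu1]; by rewrite -eq.
- have [t [ht e]] := cross h2 (ltW h1).
  apply: (coll cX cY u1 (cmb t v0 v1) z M Yu1 (cvxP cX Xv0 Xv1 ht) Xz Yz _
           m1 (scw _ _ _ _ ht m2 m3) (fun h => False_ind _ (nu1 h)) _).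
  + by rewrite dt_cmb2.
  + move=> Yv; apply: scs => // eq; [apply: nv0 | apply: nv1]; by rewrite -eq.
Qed.

Lemma minpt {R : realType} (A B : set (R*R)%type) : compact A -> compact B ->
  A `&` B !=set0 -> exists m, A m /\ B m /\ forall p, A p -> B p -> nn m <= nn p.
Proof.
move=> cA cB ne.
have cAB : compact (A `&` B).
  by apply: compact_closedI => //; apply: compact_closed => //; exact: norm_hausdorff.
have cf : {within A `&` B, continuous (@nn R)}.
  apply: continuous_subspaceT => p; rewrite /nn.
  by apply: cvgD; apply: cvgM; (try apply: cvg_fst); try apply: cvg_snd.
have [m /set_mem [Am Bm] hm] := compact_EVT_min ne cAB cf.
by exists m; split => //; split => // p Ap Bp; apply: hm; apply/mem_set.
Qed.

Lemma orient1 {R : realType} (A B C : set (R*R)%type) : orient A B C = 1 ->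
  (forall p, A p -> B p -> C p -> False) /\
  exists x y z, (B `&` C) x /\ (A `&` C) y /\ (A `&` B) z /\ 0 < dt x y z.
Proof.
rewrite /orient; case: asboolP => [_|H1]; first by [].
case: asboolP => [H2 _|_]; last by [].
by split => // p Ap Bp Cp; apply: H1; exists p.
Qed.

Lemma orient_intro {R : realType} (A B C : set (R*R)%type) :
  (forall p, A p -> B p -> C p -> False) ->
  (exists x y z, (B `&` C) x /\ (A `&` C) y /\ (A `&` B) z /\ 0 < dt x y z) ->
  orient A B C = 1.
Proof.
move=> e h; rewrite /orient; case: asboolP => [[p [[Ap Bp] Cp]]|_].
  by case: (e p).
by case: asboolP.
Qed.

Lemma bary {R : realType} (a b c p : (R*R)%type) :
  0 < dt b a p -> 0 < dt c b p -> 0 < dt a c p ->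
  exists t1 t2 : R, 0 <= t1 <= 1 /\ 0 <= t2 <= 1 /\ p = cmb t1 a (cmb t2 b c).
Proof.
move=> h1 h2 h3.
have S0 : 0 < dt b a p + dt c b p + dt a c p by lra.
have S1 : 0 < dt a c p + dt b a p by lra.
exists (dt c b p / (dt b a p + dt c b p + dt a c p)),
       (dt a c p / (dt a c p + dt b a p)); split; [|split].
- apply/andP; split; first by apply: divr_ge0; lra.
  by rewrite ler_pdivrMr //; lra.
- apply/andP; split; first by apply: divr_ge0; lra.
  by rewrite ler_pdivrMr //; lra.
- have n0 := gt_eqF S0; have n1 := gt_eqF S1.
  move: n0 n1; clear h1 h2 h3 S0 S1; rewrite /dt /cmb; case: a => a1 a2; case: b => b1 b2; case: c => c1 c2;
  case: p => p1 p2 /= n0 n1; congr pair; field; rewrite ?n0 ?n1 //.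
Qed.

Theorem lemma2 (R : realType) (F : set (set ((R * R)%type)))
  (hcomp : forall K, F K -> compact K)
  (hconv : forall K, F K -> convex_set2 K)
  (hint : forall K L, F K -> F L -> K `&` L !=set0)
  (A B C D : set ((R * R)%type))
  (hA : F A) (hB : F B) (hC : F C) (hD : F D)
  (hAB : A <> B) (hAC : A <> C) (hAD : A <> D)
  (hBC : B <> C) (hBD : B <> D) (hCD : C <> D) :
  orient A B D = 1 -> orient B C D = 1 -> orient C A D = 1 ->
  orient A B C = 1.
Proof.
move=> /orient1 [eABD [x1 [y1 [z1 [[Bx1 Dx1] [[Ay1 Dy1] [[Az1 Bz1] c1]]]]]]].
move=> /orient1 [eBCD [x2 [y2 [z2 [[Cx2 Dx2] [[By2 Dy2] [[Bz2 Cz2] c2]]]]]]].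
move=> /orient1 [eCAD [x3 [y3 [z3 [[Ax3 Dx3] [[Cy3 Dy3] [[Cz3 Az3] c3]]]]]]].
have cA := hconv _ hA; have cB := hconv _ hB; have cC := hconv _ hC; have cD := hconv _ hD.
have sABD : forall x y z, B x -> D x -> A y -> D y -> A z -> B z -> 0 < dt x y z.
  by move=> x y z Bx Dx Ay Dy Az Bz;
     exact: (indep cA cB cD eABD x1 y1 z1 x y z Bx1 Dx1 Ay1 Dy1 Az1 Bz1 Bx Dx Ay Dy Az Bz c1).
have sBCD : forall x y z, C x -> D x -> B y -> D y -> B z -> C z -> 0 < dt x y z.
  by move=> x y z Cx Dx By Dy Bz Cz;
     exact: (indep cB cC cD eBCD x2 y2 z2 x y z Cx2 Dx2 By2 Dy2 Bz2 Cz2 Cx Dx By Dy Bz Cz c2).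
have sCAD : forall x y z, A x -> D x -> C y -> D y -> C z -> A z -> 0 < dt x y z.
  by move=> x y z Ax Dx Cy Dy Cz Az;
     exact: (indep cC cA cD eCAD x3 y3 z3 x y z Ax3 Dx3 Cy3 Dy3 Cz3 Az3 Ax Dx Cy Dy Cz Az c3).
have [dA [AdA DdA]] := hint _ _ hA hD.
have [dB [BdB DdB]] := hint _ _ hB hD.
have [dC [CdC DdC]] := hint _ _ hC hD.
have eABC : forall p, A p -> B p -> C p -> False.
  move=> p Ap Bp Cp.
  have a1 := sABD _ _ _ BdB DdB AdA DdA Ap Bp.
  have a2 := sBCD _ _ _ CdC DdC BdB DdB Bp Cp.
  have a3 := sCAD _ _ _ AdA DdA CdC DdC Cp Ap.
  have [t1 [t2 [ht1 [ht2 ep]]]] := bary _ _ _ _ a1 a2 a3.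
  apply: (eABD p Ap Bp); rewrite ep.
  by apply: cvxP => //; apply: cvxP.
apply: orient_intro => //.
have [ab [Aab Bab]] := hint _ _ hA hB.
have [bc [Bbc Cbc]] := hint _ _ hB hC.
have [ca [Cca Aca]] := hint _ _ hC hA.
have nz := nonzero cA cB cC eABC _ _ _ Bbc Cbc Aca Cca Aab Bab.
have [pos|neg] := ltP 0 (dt bc ca ab).
  by exists bc, ca, ab.
have neg' : dt bc ca ab < 0 by rewrite lt_def eq_sym nz neg.
exfalso.
have [mab [Amab [Bmab minab]]] := minpt _ _ (hcomp _ hA) (hcomp _ hB) (hint _ _ hA hB).
have [mbc [Bmbc [Cmbc minbc]]] := minpt _ _ (hcomp _ hB) (hcomp _ hC) (hint _ _ hB hC).
have [mca [Cmca [Amca minca]]] := minpt _ _ (hcomp _ hC) (hcomp _ hA) (hint _ _ hC hA).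
have [mad [Amad [Dmad minad]]] := minpt _ _ (hcomp _ hA) (hcomp _ hD) (hint _ _ hA hD).
have [mbd [Bmbd [Dmbd minbd]]] := minpt _ _ (hcomp _ hB) (hcomp _ hD) (hint _ _ hB hD).
have [mcd [Cmcd [Dmcd mincd]]] := minpt _ _ (hcomp _ hC) (hcomp _ hD) (hint _ _ hC hD).
have s1 := sABD _ _ _ Bmbd Dmbd Amad Dmad Amab Bmab.
have s2 := sBCD _ _ _ Cmcd Dmcd Bmbd Dmbd Bmbc Cmbc.
have s3 := sCAD _ _ _ Amad Dmad Cmcd Dmcd Cmca Amca.
have s4 : dt mbc mca mab < 0.
  have nz' := nonzero cA cB cC eABC _ _ _ Bmbc Cmbc Amca Cmca Amab Bmab.
  rewrite lt_def eq_sym nz' /= leNgt; apply/negP => hp.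
  have := indep cA cB cC eABC _ _ _ bc ca ab Bmbc Cmbc Amca Cmca Amab Bmab
            Bbc Cbc Aca Cca Aab Bab hp.
  by rewrite ltNge neg.
pose M := Num.max (Num.max (Num.max (nn mab) (nn mbc)) (Num.max (nn mca) (nn mad)))
                  (Num.max (nn mbd) (nn mcd)).
have lab : nn mab <= M by rewrite /M !le_max lexx /= ?orbT.
have lbc : nn mbc <= M by rewrite /M !le_max lexx /= ?orbT.
have lca : nn mca <= M by rewrite /M !le_max lexx /= ?orbT.
have lad : nn mad <= M by rewrite /M !le_max lexx /= ?orbT.
have lbd : nn mbd <= M by rewrite /M !le_max lexx /= ?orbT.
have lcd : nn mcd <= M by rewrite /M !le_max lexx /= ?orbT.
have fab : nn mab < M.
  have [w [Aw [Bw nw]]] := flip cA cB mab mbd mbc mad mca M Amab Bmab Bmbd Bmbc Amad Amca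
    (fun h => eABD _ h Bmbd Dmbd) (fun h => eABC _ h Bmbc Cmbc)
    (fun h => eABD _ Amad h Dmad) (fun h => eABC _ Amca h Cmca)
    lbd lbc lad lca s1 s4.
  exact: le_lt_trans (minab w Aw Bw) nw.
have fbc : nn mbc < M.
  have h1 : dt mca mab mbc < 0 by rewrite -dt_cyc.
  have [w [Bw [Cw nw]]] := flip cB cC mbc mcd mca mbd mab M Bmbc Cmbc Cmcd Cmca Bmbd Bmab
    (fun h => eBCD _ h Cmcd Dmcd) (fun h => eABC _ Amca h Cmca)
    (fun h => eBCD _ Bmbd h Dmbd) (fun h => eABC _ Amab Bmab h)
    lcd lca lbd lab s2 h1.
  exact: le_lt_trans (minbc w Bw Cw) nw.
have fca : nn mca < M.
  have h1 : dt mab mbc mca < 0 by rewrite dt_cyc.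
  have [w [Cw [Aw nw]]] := flip cC cA mca mad mab mcd mbc M Cmca Amca Amad Amab Cmcd Cmbc
    (fun h => eCAD _ h Amad Dmad) (fun h => eABC _ Amab Bmab h)
    (fun h => eCAD _ Cmcd h Dmcd) (fun h => eABC _ h Bmbc Cmbc)
    lad lab lcd lbc s3 h1.
  exact: le_lt_trans (minca w Cw Aw) nw.
have fad : nn mad < M.
  have h0 : 0 < dt mab mbd mad by rewrite dt_cyc.
  have h1 : dt mca mcd mad < 0 by move: s3; rewrite /dt; lra.
  have [w [Dw [Aw nw]]] := flip cD cA mad mab mca mbd mcd M Dmad Amad Amab Amca Dmbd Dmcd
    (fun h => eABD _ Amab Bmab h) (fun h => eCAD _ Cmca Amca h)
    (fun h => eABD _ h Bmbd Dmbd) (fun h => eCAD _ Cmcd h Dmcd)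
    lab lca lbd lcd h0 h1.
  exact: le_lt_trans (minad w Aw Dw) nw.
have fbd : nn mbd < M.
  have h0 : 0 < dt mad mab mbd by move: s1; rewrite /dt; lra.
  have h1 : dt mcd mbc mbd < 0 by move: s2; rewrite /dt; lra.
  have [w [Bw [Dw nw]]] := flip cB cD mbd mad mcd mab mbc M Bmbd Dmbd Dmad Dmcd Bmab Bmbc
    (fun h => eABD _ Amad h Dmad) (fun h => eBCD _ h Cmcd Dmcd)
    (fun h => eABD _ Amab Bmab h) (fun h => eBCD _ Bmbc Cmbc h)
    lad lcd lab lbc h0 h1.
  exact: le_lt_trans (minbd w Bw Dw) nw.
have fcd : nn mcd < M.
  have h0 : 0 < dt mbd mbc mcd by move: s2; rewrite /dt; lra.
  have h1 : dt mad mca mcd < 0 by move: s3; rewrite /dt; lra.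
  have [w [Cw [Dw nw]]] := flip cC cD mcd mbd mad mbc mca M Cmcd Dmcd Dmbd Dmad Cmbc Cmca
    (fun h => eBCD _ Bmbd h Dmbd) (fun h => eCAD _ h Amad Dmad)
    (fun h => eBCD _ Bmbc Cmbc h) (fun h => eCAD _ Cmca Amca h)
    lbd lad lbc lca h0 h1.
  exact: le_lt_trans (mincd w Cw Dw) nw.
have : M < M by rewrite {1}/M !gt_max fab fbc fca fad fbd fcd.
by rewrite ltxx.
Qed.
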